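(* Let $D$ be a friendship digraph of order $n$. Then $\bigl(d^-(u)-1\bigr)\bigl(d^-(v)-1\bigr)\leq n-2$ for any two distinct vertices $u$ and $v$ of $D$.
   Context: All digraphs are finite and have neither loops nor parallel arcs (a pair of opposite arcs $(u,v)$ and $(v,u)$ is allowed). $d^-(v)$ is the indegree of $v$. A friendship digraph is a nontrivial digraph (at least two vertices) in which any two distinct vertices have exactly one common out-neighbor. *)

(* Defs.v *)
From mathcomp Require Import all_boot all_order all_algebra.
Set Implicit Arguments. Unset Strict Implicit. Unset Printing Implicit Defensive.

(* A digraph on a finite vertex type T is given by its arc relation e:
   e u v means there is an arc (u,v).
   Parallel arcs are impossible by construction; opposite arcs allowed. *)
Definition loopless (T : finType) (e : rel T) : Prop := forall v, ~~ e v v.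

Definition indeg (T : finType) (e : rel T) (v : T) : nat := #|[set u | e u v]|.

Definition common_out (T : finType) (e : rel T) (x y : T) : {set T} :=
  [set z | e x z && e y z].

Definition friendship_digraph (T : finType) (e : rel T) : Prop :=
  [/\ loopless e, 2 <= #|T| &
      forall x y : T, x != y -> #|common_out e x y| = 1].

(* Main.v *)
Require Import Defs.
From mathcomp Require Import all_boot all_order all_algebra.
From mathcomp Require Import zify.
Import GRing.Theory Num.Theory.
Set Implicit Arguments. Unset Strict Implicit.

Section S.
Variables (T : finType) (e : rel T).
Hypothesis loop : loopless e.
Hypothesis fr : forall x y : T, x != y -> #|common_out e x y| = 1.

Definition cc x y := odflt x [pick z in common_out e x y].

Lemma cc_spec x y : x != y -> e x (cc x y) && e y (cc x y).
Proof.
move=> /fr/eqP/cards1P [z Hz]; rewrite /cc.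
case: pickP => [w|] /=; first by rewrite inE.
by move/(_ z); rewrite Hz set11.
Qed.

Lemma cc_uniq x y w : x != y -> e x w -> e y w -> w = cc x y.
Proof.
move=> nxy exw eyw; have := cc_spec nxy.
move: (fr nxy) => /eqP/cards1P [z Hz] /andP[h1 h2].
have : w \in common_out e x y by rewrite inE exw eyw.
have : cc x y \in common_out e x y by rewrite inE h1 h2.
by rewrite Hz !inE => /eqP -> /eqP ->.
Qed.
End S.

Theorem lemma2p6 (T : finType) (e : rel T) :
  friendship_digraph e ->
  forall u v : T, u != v ->
  (((indeg e u)%:Z - 1) * ((indeg e v)%:Z - 1) <= (#|T|)%:Z - 2)%R.
Proof.
case=> loop n2 fr u v nuv.
set A := [set x | e x u]; set B := [set x | e x v].
set Z := A :&: B.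
set S := [set w | (w != u) && (w != v)].
have cardS : #|S| = (#|T| - 2)%N.
  have -> : S = ~: [set u; v].
    by apply/setP => w; rewrite !inE negb_or.
  have := cardsC [set u; v]; rewrite cards2 nuv; lia.
have n3 : (3 <= #|T|)%N.
  have := cc_spec fr nuv => /andP [h1 h2].
  have : cc e u v \in S.
    rewrite inE; apply/andP; split; apply/eqP => E.
      by move: h1; rewrite E (negbTE (loop u)).
    by move: h2; rewrite E (negbTE (loop v)).
  move=> H; have : (0 < #|S|)%N by apply/card_gt0P; exists (cc e u v).
  rewrite cardS; lia.
have Zle : (#|Z| <= 1)%N.
  rewrite leqNgt; apply/negP => /card_gt1P [z1 [z2 [Hz1 Hz2 nz]]].
  move: Hz1 Hz2; rewrite !inE => /andP[a1 b1] /andP[a2 b2].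
  have := cc_uniq fr nz a1 a2; have := cc_uniq fr nz b1 b2.
  by move=> <- E; move: nuv; rewrite E eqxx.
set A' := A :\: Z; set B' := B :\: Z.
have cA : #|A'| = (#|A| - #|Z|)%N.
  by rewrite cardsD (setIidPr _) // subsetIl.
have cB : #|B'| = (#|B| - #|Z|)%N.
  by rewrite cardsD (setIidPr _) // subsetIr.
have ZA : (#|Z| <= #|A|)%N by apply: subset_leq_card; apply: subsetIl.
have ZB : (#|Z| <= #|B|)%N by apply: subset_leq_card; apply: subsetIr.
have key : (#|A'| * #|B'| <= #|T| - 2)%N.
  rewrite -cardsX -cardS.
  have memA x : x \in A' -> e x u && ~~ e x v.
    by rewrite !inE; case: (e x u); case: (e x v).
  have memB x : x \in B' -> e x v && ~~ e x u.
    by rewrite !inE; case: (e x u); case: (e x v).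
  have neq x y : x \in A' -> y \in B' -> x != y.
    move=> /memA /andP[_ h] /memB /andP[h' _]; apply/eqP => E.
    by move: h; rewrite E h'.
  have inS x y : x \in A' -> y \in B' -> cc e x y \in S.
    move=> hx hy; have := cc_spec fr (neq _ _ hx hy) => /andP[h1 h2].
    move: (memA _ hx) (memB _ hy) => /andP[xu xv] /andP[yv yu].
    rewrite inE; apply/andP; split; apply/eqP => E.
      by move: yu; rewrite -E h2.
    by move: xv; rewrite -E h1.
  have -> : #|setX A' B'| = #|[set cc e p.1 p.2 | p in setX A' B']|.
    apply/esym/card_in_imset => [[x y] [x' y']] /=.
    rewrite !in_setX /= => /andP[hx hy] /andP[hx' hy'] E.
    have wS := inS _ _ hx hy.
    move: (memA _ hx) (memB _ hy) (memA _ hx') (memB _ hy').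
    move=> /andP[xu _] /andP[yv _] /andP[x'u _] /andP[y'v _].
    have := cc_spec fr (neq _ _ hx hy) => /andP[h1 h2].
    have := cc_spec fr (neq _ _ hx' hy') => /andP[h1' h2'].
    rewrite -E in h1' h2'.
    move: wS; rewrite inE => /andP[wu wv].
    have ex : x = x'.
      apply/eqP; apply/negP => /negP nx.
      by have := cc_uniq fr nx h1 h1'; have := cc_uniq fr nx xu x'u;
        move=> <- Ew; move: wu; rewrite Ew eqxx.
    have ey : y = y'.
      apply/eqP; apply/negP => /negP ny.
      by have := cc_uniq fr ny h2 h2'; have := cc_uniq fr ny yv y'v;
        move=> <- Ew; move: wv; rewrite Ew eqxx.
    by rewrite ex ey.
  apply: subset_leq_card; apply/subsetP => w /imsetP [[x y]].
  by rewrite in_setX /= => /andP[hx hy] ->; apply: inS.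
rewrite /indeg -/A -/B.
move: key; rewrite cA cB.
move: (#|A|) (#|B|) (#|Z|) ZA ZB Zle n3 => a b k.
case: k => [|[|//]] ha hb _ n3'; rewrite ?subn0 ?subn1 => H; nia.
Qed.
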